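(* Let $\mathcal{A}$ be a one-dimensional cellular automaton which is not sensitive to initial conditions, and let $\mu$ be any complete Bernoulli measure on $Q^{\mathbb{Z}}$. Then the set $L_\mu(\mathcal{A})$ of $\mu$-persistent words of $\mathcal{A}$ is exactly the set of bricks of wall for $\mathcal{A}$.
   Context: A one-dimensional cellular automaton (CA) $\mathcal{A}$ is given by a finite alphabet $Q$, a radius $r\ge 0$ and a local rule $\delta:Q^{2r+1}\to Q$; it acts on configurations $c\in Q^{\mathbb{Z}}$ by $\mathcal{A}(c)_i=\delta(c_{i-r},\dots,c_{i+r})$. For a word $u\in Q^*$ and $i\in\mathbb{Z}$, the cylinder is $[u]_i=\{c\in Q^{\mathbb{Z}}: c_ic_{i+1}\cdots c_{i+|u|-1}=u\}$. A Bernoulli measure $\mu$ on $Q^{\mathbb{Z}}$ is given by a probability vector $(p_a)_{a\in Q}$ with $\mu([u]_i)=\prod_{a\in Q}p_a^{|u|_a}$ for all $u,i$, where $|u|_a$ is the number of occurrences of $a$ in $u$; it is complete if $p_a>0$ for all $a$; the uniform measure has $p_a=1/|Q|$. For $n\ge0$, $\mathcal{A}^n\mu$ is the measure $U\mapsto\mu(\mathcal{A}^{-n}(U))$. A word $u\in Q^*$ is vanishing for $(\mathcal{A},\mu)$ if $\lim_{n\to\infty}\mathcal{A}^n\mu([u]_0)=0$, and persistent otherwise; $L_\mu(\mathcal{A})$ denotes the set of persistent words. The $\mu$-limit set is $\Lambda_\mu(\mathcal{A})=\{c\in Q^{\mathbb{Z}}:\text{every finite subword of }c\text{ lies in }L_\mu(\mathcal{A})\}$.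 Walls: for $u\in Q^*$ let $\langle u\rangle=[u]_{-|u|/2}$ if $|u|$ is even and $\langle u\rangle=[u]_{-(|u|+1)/2}$ if $|u|$ is odd. A wall for $\mathcal{A}$ is a sequence $(w_n)_{n\ge0}$ of nonempty words over $Q$ such that (1) for every $c\in\langle w_0\rangle$ and every $n\ge1$, $\mathcal{A}^n(c)\in\langle w_n\rangle$, and (2) the sequence $(|w_n|)_{n\ge0}$ is non-increasing. The word $w_0$ is the foot of the wall. A word $w$ is a brick of the wall $(w_n)$ if there are integers $p\ge1$, $n_0\ge0$ with $w_{pn+n_0}=w$ for all $n\ge0$. A word is a brick of wall for $\mathcal{A}$ if it is a brick of some wall for $\mathcal{A}$. Sensitivity: equip $Q^{\mathbb{Z}}$ with the Cantor metric $d(c,c')=2^{-\min\{|i|:c_i\neq c'_i\}}$. $\mathcal{A}$ is sensitive to initial conditions if there is $\varepsilon>0$ such that for every $c$ and every $\eta>0$ there exist $c'$ with $d(c,c')<\eta$ and $n\ge0$ with $d(\mathcal{A}^n(c),\mathcal{A}^n(c'))\ge\varepsilon$. *)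

(* Defs.v *)
From HB Require Import structures.
From mathcomp Require Import all_boot all_order all_algebra.
From mathcomp Require Import boolp classical_sets reals topology normedtype sequences.

Set Implicit Arguments.
Unset Strict Implicit.
Unset Printing Implicit Defensive.
Import Order.TTheory GRing.Theory Num.Theory.
Import numFieldNormedType.Exports.
Local Open Scope classical_set_scope.
Local Open Scope ring_scope.

Definition config (Q : finType) := int -> Q.

(* Global map of the CA with alphabet Q, radius r and local rule
   delta : Q^{2r+1} -> Q (window entries indexed 0..2r, i.e. c_{i-r}..c_{i+r}). *)
Definition ca_map (Q : finType) (r : nat)
  (delta : {ffun 'I_(2 * r + 1) -> Q} -> Q) (c : config Q) : config Q :=
  fun i => delta [ffun j : 'I_(2 * r + 1) => c (i - r%:Z + (j : nat)%:Z)].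

Definition ca_iter (Q : finType) (r : nat)
  (delta : {ffun 'I_(2 * r + 1) -> Q} -> Q) (n : nat) (c : config Q) : config Q :=
  iter n (ca_map delta) c.

Definition cyl (Q : finType) (u : seq Q) (i : int) (c : config Q) : Prop :=
  forall j : nat, (j < size u)%N -> forall x0 : Q, c (i + j%:Z) = nth x0 u j.

Definition ccyl (Q : finType) (u : seq Q) (c : config Q) : Prop :=
  if ~~ odd (size u) then cyl u (- (size u %/ 2)%:Z) c
  else cyl u (- ((size u).+1 %/ 2)%:Z) c.

(* Cantor-metric sensitivity, with d(c,c') < eta written as "c, c' agree on
   [-m,m]" and d(x,y) >= eps written as "x, y differ somewhere in [-k,k]"
   (eps = 2^-k, eta = 2^-m). *)
Definition agree_on (Q : finType) (m : nat) (c c' : config Q) : Prop :=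
  forall i : int, (`|i| <= m)%N -> c i = c' i.

Definition sensitive (Q : finType) (r : nat)
  (delta : {ffun 'I_(2 * r + 1) -> Q} -> Q) : Prop :=
  exists k : nat, forall (c : config Q) (m : nat),
    exists (c' : config Q) (n : nat),
      agree_on m c c' /\ ~ agree_on k (ca_iter delta n c) (ca_iter delta n c').

Definition complete_bernoulli (R : realType) (Q : finType) (p : Q -> R) : Prop :=
  (forall a, 0 < p a) /\ \sum_(a : Q) p a = 1.

(* (A^n mu)([u]_0) = mu(A^{-n}([u]_0)).  A^{-n}([u]_0) depends only on the
   coordinates -nr .. |u|-1+nr, so it is the disjoint union of the cylinders
   [v]_{-nr}, |v| = |u| + 2nr, contained in it; mu of a cylinder [v]_i is
   prod_k p_{v_k}. *)
Definition pushforward_cyl (R : realType) (Q : finType) (r : nat)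
  (delta : {ffun 'I_(2 * r + 1) -> Q} -> Q) (p : Q -> R) (n : nat) (u : seq Q) : R :=
  \sum_(v : (size u + 2 * (n * r)).-tuple Q |
          `[< forall c : config Q, cyl v (- (n * r)%:Z) c ->
                cyl u 0 (ca_iter delta n c) >])
     \prod_(x <- v) p x.

Definition vanishing (R : realType) (Q : finType) (r : nat)
  (delta : {ffun 'I_(2 * r + 1) -> Q} -> Q) (p : Q -> R) (u : seq Q) : Prop :=
  (fun n => pushforward_cyl delta p n u) @ \oo --> (0 : R).

Definition persistent (R : realType) (Q : finType) (r : nat)
  (delta : {ffun 'I_(2 * r + 1) -> Q} -> Q) (p : Q -> R) (u : seq Q) : Prop :=
  ~ vanishing delta p u.

Definition is_wall (Q : finType) (r : nat)
  (delta : {ffun 'I_(2 * r + 1) -> Q} -> Q) (w : nat -> seq Q) : Prop :=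
  (forall n, w n != [::]) /\
  (forall (c : config Q), ccyl (w 0%N) c ->
     forall n : nat, (1 <= n)%N -> ccyl (w n) (ca_iter delta n c)) /\
  (forall n, (size (w n.+1) <= size (w n))%N).

Definition brick_of (Q : finType) (w : nat -> seq Q) (u : seq Q) : Prop :=
  exists (p n0 : nat), (1 <= p)%N /\ forall n : nat, w (p * n + n0)%N = u.

Definition brick_of_wall (Q : finType) (r : nat)
  (delta : {ffun 'I_(2 * r + 1) -> Q} -> Q) (u : seq Q) : Prop :=
  exists w : nat -> seq Q, is_wall delta w /\ brick_of w u.

(* Main.v *)
Require Import Defs.
From HB Require Import structures.
From mathcomp Require Import all_boot all_order all_algebra.
From mathcomp Require Import boolp classical_sets reals topology normedtype sequences.
From mathcomp Require Import zify ring lra.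

Set Implicit Arguments.
Unset Strict Implicit.
Unset Printing Implicit Defensive.

Section Meas.
Import Order.TTheory GRing.Theory Num.Theory.
Local Open Scope ring_scope.
Variables (R : realType) (Q : finType) (p : Q -> R).

Fixpoint EE (n : nat) (F : seq Q -> R) : R :=
  if n is n'.+1 then \sum_(q : Q) p q * EE n' (fun s => F (q :: s)) else F [::].

Lemma EE_ext n F G : (forall s, size s = n -> F s = G s) -> EE n F = EE n G.
Proof.
elim: n F G => [|n IH] F G H /=; first by rewrite H.
apply: eq_bigr => q _; congr (_ * _); apply: IH => s Hs; apply: H => /=; by rewrite Hs.
Qed.

Lemma EE_add n F G : EE n (fun s => F s + G s) = EE n F + EE n G.
Proof.
elim: n F G => [|n IH] F G //=.
rewrite -big_split /=; apply: eq_bigr => q _; by rewrite IH mulrDr.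
Qed.

Lemma EE_scale n c F : EE n (fun s => c * F s) = c * EE n F.
Proof.
elim: n F => [|n IH] F //=.
rewrite mulr_sumr; apply: eq_bigr => q _; rewrite IH; ring.
Qed.

Hypothesis p_ge0 : forall a, 0 <= p a.
Hypothesis p_sum : \sum_(a : Q) p a = 1.

Lemma EE_const n c : EE n (fun _ => c) = c.
Proof.
elim: n => [|n IH] //=.
under eq_bigr do rewrite IH.
by rewrite -mulr_suml p_sum mul1r.
Qed.

Lemma EE_le n F G : (forall s, size s = n -> F s <= G s) -> EE n F <= EE n G.
Proof.
elim: n F G => [|n IH] F G H /=; first by apply: H.
apply: ler_sum => q _; apply: ler_wpM2l => //; apply: IH => s Hs; apply: H => /=; by rewrite Hs.
Qed.

Lemma EE_ge0 n F : (forall s, size s = n -> 0 <= F s) -> 0 <= EE n F.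
Proof. move=> H; rewrite -(EE_const n 0); exact: EE_le. Qed.

Lemma EE_concat a b F : EE (a + b) F = EE a (fun x => EE b (fun y => F (x ++ y))).
Proof.
elim: a F => [|a IH] F //=.
apply: eq_bigr => q _; by rewrite IH.
Qed.

Lemma EE_eq w : EE (size w) (fun s => (s == w)%:R) = \prod_(x <- w) p x.
Proof.
elim: w => [|a w IH] /=; first by rewrite big_nil.
rewrite big_cons (bigD1 a) //= big1 ?addr0.
  rewrite -IH; congr (_ * _); apply: EE_ext => s _; rewrite eqseq_cons eqxx /=; by case: (s == w).
move=> q /negbTE Hq; rewrite (EE_ext (G := fun _ => 0)) ?EE_const ?mulr0 // => s _.
by rewrite eqseq_cons Hq.
Qed.

Lemma tuple_sum n F :
  \sum_(v : n.-tuple Q) F (val v) * \prod_(x <- val v) p x = EE n F.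
Proof.
elim: n F => [|n IH] F /=.
  rewrite (big_pred1 [tuple]) /=; first by rewrite big_nil mulr1.
  by move=> t; apply/esym/eqP; exact: tuple0.
rewrite (reindex (fun qt : Q * n.-tuple Q => cons_tuple qt.1 qt.2)) /=.
  rewrite -(pair_big xpredT xpredT (fun q (t : n.-tuple Q) => F (q :: val t) * \prod_(x <- q :: val t) p x)) /=.
  apply: eq_bigr => q _; rewrite -IH mulr_sumr; apply: eq_bigr => t _.
  rewrite big_cons; ring.
exists (fun t : n.+1.-tuple Q => (thead t, behead_tuple t)).
  case=> q t /= _; rewrite theadE; congr pair; exact: val_inj.
move=> t _ /=; apply: val_inj => /=; by case: t => [[|a s] //= _].
Qed.

End Meas.


Set Implicit Arguments.
Unset Strict Implicit.
Unset Printing Implicit Defensive.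

Section CA.
Import Order.TTheory GRing.Theory Num.Theory.
Local Open Scope ring_scope.
Variables (Q : finType) (r : nat) (delta : {ffun 'I_(2 * r + 1) -> Q} -> Q).

Local Notation A := (ca_iter delta).

Lemma A_S n c : A n.+1 c = ca_map delta (A n c).
Proof. by []. Qed.

Lemma ca_map_loc (c c' : config Q) i :
  (forall j : int, i - r%:Z <= j <= i + r%:Z -> c j = c' j) ->
  ca_map delta c i = ca_map delta c' i.
Proof.
move=> H; rewrite /ca_map; congr delta; apply/ffunP => j; rewrite !ffunE.
apply: H; have := ltn_ord j; lia.
Qed.

Lemma A_shift n (c : config Q) (s : int) :
  A n (fun i => c (i + s)) = fun i => A n c (i + s).
Proof.
elim: n => [|n IH] //; rewrite !A_S IH.
apply: funext => i; rewrite /ca_map; congr delta; apply/ffunP => j; rewrite !ffunE.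
congr (A n c); ring.
Qed.

Lemma light_cone n (x y : int) (c c' : config Q) :
  (forall i, x - (n * r)%:Z <= i < y + (n * r)%:Z -> c i = c' i) ->
  forall i, x <= i < y -> A n c i = A n c' i.
Proof.
elim: n x y => [|n IH] x y H i Hi.
  by apply: H; move: Hi; rewrite mul0n subr0 addr0.
rewrite !A_S; apply: ca_map_loc => j Hj.
apply: (IH (x - r%:Z) (y + r%:Z)); last by lia.
move=> k Hk; apply: H; rewrite mulSn; lia.
Qed.

Lemma segment (y1 y2 : int) (c c' : config Q) :
  (forall n i, (y1 - r%:Z <= i <= y1 + r%:Z) || (y2 - r%:Z <= i <= y2 + r%:Z) ->
     A n c i = A n c' i) ->
  (forall i, y1 - r%:Z <= i <= y2 + r%:Z -> c i = c' i) ->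
  forall n i, y1 - r%:Z <= i <= y2 + r%:Z -> A n c i = A n c' i.
Proof.
move=> Hcol H0; elim=> [|n IH] i Hi; first exact: H0.
case Hc: ((y1 - r%:Z <= i <= y1 + r%:Z) || (y2 - r%:Z <= i <= y2 + r%:Z)).
  exact: Hcol.
rewrite !A_S; apply: ca_map_loc => j Hj; apply: IH.
move: Hc => /negbT; rewrite negb_or !negb_and -!ltNge => /andP[H1 H2]; lia.
Qed.

End CA.


Set Implicit Arguments.
Unset Strict Implicit.
Unset Printing Implicit Defensive.

Section Per.
Import Order.TTheory GRing.Theory Num.Theory.
Local Open Scope ring_scope.
Variables (Q : finType) (r : nat) (delta : {ffun 'I_(2 * r + 1) -> Q} -> Q).

Local Notation A := (ca_iter delta).

Lemma per_int (f : int -> Q) (L : int) :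
  (forall i, f (i + L) = f i) -> forall (z : int) i, f (i + z * L) = f i.
Proof.
move=> H.
have Hpos : forall (k : nat) i, f (i + k%:Z * L) = f i.
  elim=> [|k IH] i; first by rewrite mul0r addr0.
  by rewrite -[k.+1]addn1 PoszD mulrDl mul1r addrA H IH.
case=> [k|k] i; first exact: Hpos.
rewrite -(Hpos k.+1 (i + Negz k * L)); congr f; rewrite NegzE; ring.
Qed.

Lemma per_ext (f : int -> Q) (L : nat) (x : int) :
  (0 < L)%N -> (forall i, f (i + L%:Z) = f i) ->
  forall i, f i = f (x + ((absz ((i - x) %% L%:Z)%Z))%:Z).
Proof.
move=> HL H i.
have Hge : 0 <= ((i - x) %% L%:Z)%Z by apply: modz_ge0; lia.
rewrite gez0_abs //.
rewrite -(per_int H ((i - x) %/ L%:Z)%Z (x + _)).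
congr f; rewrite -addrA (addrC _ (_ * _)) -divz_eq; ring.
Qed.

Definition pext (x0 : Q) (w : seq Q) (x : int) : config Q :=
  fun i => nth x0 w (absz ((i - x) %% (size w)%:Z)%Z).

Lemma pext_cyl x0 w x : cyl w x (pext x0 w x).
Proof.
move=> j Hj y0; rewrite /pext.
have -> : (x + j%:Z - x = j%:Z) by ring.
rewrite modz_small; last by lia.
by rewrite absz_nat; apply: set_nth_default.
Qed.

Lemma pext_per x0 w x i : pext x0 w x (i + (size w)%:Z) = pext x0 w x i.
Proof.
rewrite /pext.
by rewrite (_ : i + (size w)%:Z - x = (i - x) + (size w)%:Z) ?modzDr //; ring.
Qed.

Lemma A_per (c : config Q) (L : nat) n :
  (forall i, c (i + L%:Z) = c i) -> forall i, A n c (i + L%:Z) = A n c i.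
Proof.
move=> H i.
have Hc : (fun i => c (i + L%:Z)) = c by apply: funext => k; apply: H.
have E := A_shift delta n c L%:Z; rewrite Hc in E; by rewrite {2}E.
Qed.

Lemma eventually_periodic (c : config Q) (L : nat) (x : int) :
  (0 < L)%N -> (forall i, c (i + L%:Z) = c i) ->
  exists n1 P, (0 < P)%N /\ forall n, (n1 <= n)%N -> A (n + P) c = A n c.
Proof.
move=> HL Hc.
pose T := {ffun 'I_L -> Q}.
pose g := fun k : 'I_(#|T|.+1) => [ffun j : 'I_L => A k c (x + (j : nat)%:Z)] : T.
have [k1 [k2 [Hne Heq]]] : exists k1 k2, k1 <> k2 /\ g k1 = g k2.
  apply: contrapT => Hn.
  have Hinj : injective g.
    move=> a b Hab; apply: contrapT => Hab'; apply: Hn; by exists a, b.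
  by have := leq_card _ Hinj; rewrite card_ord ltnn.
have Heq' : forall a b : 'I_(#|T|.+1), g a = g b -> A a c = A b c.
  move=> a b Hab; apply: funext => i.
  rewrite (per_ext x HL (A_per a Hc) i) (per_ext x HL (A_per b Hc) i).
  have Hlt : (absz ((i - x) %% L%:Z)%Z < L)%N.
    have H0 : (0 < L%:Z) by lia.
    have H1 : (L%:Z != 0) by lia.
    have := ltz_pmod (i - x) H0; have := modz_ge0 (i - x) H1; lia.
  have := congr1 (fun f : T => f (Ordinal Hlt)) Hab; by rewrite !ffunE.
have Hgen : forall a b : nat, (a < b)%N -> A a c = A b c ->
    exists n1 P, (0 < P)%N /\ forall n, (n1 <= n)%N -> A (n + P) c = A n c.
  move=> a b Hab Habc; exists a, (b - a)%N; split; first by rewrite subn_gt0.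
  move=> n Hn; rewrite -(subnK Hn).
  have -> : (n - a + a + (b - a) = (n - a) + b)%N by lia.
  by rewrite /ca_iter !iterD -/(ca_iter delta a c) -/(ca_iter delta b c) Habc.
have := Heq' _ _ Heq.
case: (ltngtP k1 k2) => Hk.
- exact: Hgen.
- by move=> E; apply: (Hgen k2 k1) => //.
- by move=> _; exfalso; apply: Hne; apply: val_inj.
Qed.

Lemma periodic_k (c : config Q) n0 P :
  (forall n, (n0 <= n)%N -> A (n + P) c = A n c) ->
  forall k, A (n0 + k * P) c = A n0 c.
Proof.
move=> H; elim=> [|k IH]; first by rewrite mul0n addn0.
have -> : (n0 + k.+1 * P = (n0 + k * P) + P)%N by rewrite mulSn; lia.
by rewrite H ?IH // leq_addr.
Qed.
End Per.


Set Implicit Arguments.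
Unset Strict Implicit.
Unset Printing Implicit Defensive.

Lemma half_even n : ~~ odd n -> (n.+1 %/ 2 = n %/ 2)%N.
Proof. move=> H; by rewrite !divn2 /= uphalf_half (negbTE H). Qed.

Section Wall.
Import Order.TTheory GRing.Theory Num.Theory.
Local Open Scope ring_scope.
Variables (Q : finType) (r : nat) (delta : {ffun 'I_(2 * r + 1) -> Q} -> Q).
Local Notation A := (ca_iter delta).

Lemma ccyl_eq (w : seq Q) c : ccyl w c <-> cyl w (- ((size w).+1 %/ 2)%:Z) c.
Proof. by rewrite /ccyl; case: ifP => // H; rewrite half_even. Qed.

Variable u : seq Q.

Definition det (a : nat) (w : seq Q) : Prop :=
  forall c c' : config Q, cyl w (- a%:Z) c -> cyl w (- a%:Z) c' ->
    forall n (j : nat), (j < size u)%N -> A n c j%:Z = A n c' j%:Z.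

Lemma brick_from_det a w x0 :
  size w = (size u + 2 * a)%N -> (0 < size u)%N -> det a w ->
  (forall N, exists n, (N <= n)%N /\ cyl u 0 (A n (pext x0 w (- a%:Z)))) ->
  brick_of_wall delta u.
Proof.
move=> Hsw Hu Hdet Hinf.
set cs := pext x0 w (- a%:Z).
have [n1 [P [HP Hper]]] : exists n1 P, (0 < P)%N /\
    forall n, (n1 <= n)%N -> A (n + P) cs = A n cs.
  apply: (@eventually_periodic _ _ delta cs (size w) 0); first by rewrite Hsw; lia.
  exact: pext_per.
have [n0 [Hn0 Hocc]] := Hinf (maxn n1 1).
pose W := fun n : nat => if n is 0%N then w else mkseq (fun j : nat => A n cs j%:Z) (size u).
have HW : forall n, (0 < n)%N -> W n = mkseq (fun j : nat => A n cs j%:Z) (size u).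
  by case.
exists W; split; last first.
  exists P, n0; split => // k.
  rewrite HW; last by lia.
  rewrite addnC mulnC periodic_k; last first.
    by move=> n Hn; apply: Hper; lia.
  apply: (@eq_from_nth _ x0); first by rewrite size_mkseq.
  move=> j; rewrite size_mkseq => Hj; rewrite nth_mkseq //.
  by rewrite -(Hocc j Hj x0) add0r.
split; last split.
- case=> [|n] /=; first by rewrite -size_eq0 Hsw; lia.
  by rewrite -size_eq0 size_mkseq; lia.
- move=> c; rewrite ccyl_eq /= => Hc n Hn.
  rewrite HW // ccyl_eq size_mkseq => j Hj y0; rewrite size_mkseq in Hj.
  rewrite nth_mkseq //.
  set o := - ((size u).+1 %/ 2)%:Z.
  pose co := fun i => c (i + o).
  have Hco : cyl w (- a%:Z) co.
    move=> k Hk z0; rewrite /co -(Hc k Hk z0); congr c.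
    rewrite /o Hsw; have -> : ((size u + 2 * a).+1 %/ 2 = (size u).+1 %/ 2 + a)%N.
      by rewrite -addSn mulnC divnDMl.
    rewrite PoszD; ring.
  have Hcs : cyl w (- a%:Z) cs by apply: pext_cyl.
  have := Hdet co cs Hco Hcs n j Hj.
  rewrite /co A_shift => <-; by rewrite addrC.
- case=> [|n] /=; first by rewrite size_mkseq Hsw leq_addr.
  by rewrite !size_mkseq.
Qed.

End Wall.


Set Implicit Arguments.
Unset Strict Implicit.
Unset Printing Implicit Defensive.

Section Block.
Import Order.TTheory GRing.Theory Num.Theory.
Local Open Scope ring_scope.
Variables (Q : finType) (r : nat) (delta : {ffun 'I_(2 * r + 1) -> Q} -> Q).
Local Notation A := (ca_iter delta).
Variables (c0 : config Q) (m : nat).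
Hypothesis Hm : (r <= m)%N.
Hypothesis Hblk : forall (c' : config Q) n, agree_on m c0 c' ->
  agree_on r (A n c0) (A n c').

Definition B := (2 * m + 1)%N.
Definition bw := mkseq (fun j : nat => c0 (j%:Z - m%:Z)) B.

Lemma size_bw : size bw = B.
Proof. by rewrite size_mkseq. Qed.

Lemma blk_shift (c : config Q) (y : int) : cyl bw (y - m%:Z) c ->
  forall n (i : int), (`|i| <= r)%N -> A n c (y + i) = A n c0 i.
Proof.
move=> Hc n i Hi.
pose cy := fun k => c (k + y).
have Hag : agree_on m c0 cy.
  move=> k Hk; rewrite /cy.
  have Hlt : (absz (k + m%:Z)%R < size bw)%N by rewrite size_bw /B; lia.
  have := Hc _ Hlt (c0 0); rewrite nth_mkseq; last by rewrite -size_bw.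
  have -> : (absz (k + m%:Z)%R)%:Z = k + m%:Z by lia.
  have -> : y - m%:Z + (k + m%:Z) = k + y by ring.
  move=> ->; congr c0; ring.
have := Hblk n Hag Hi; rewrite /cy A_shift => ->; by rewrite addrC.
Qed.

Fixpoint hasblk (J : nat) (x : seq Q) : bool :=
  if J is J'.+1 then (take B x == bw) || hasblk J' (drop B x) else false.

Lemma hasblkP J x x0 : hasblk J x ->
  exists t, (t < J)%N /\ forall j, (j < B)%N -> nth x0 x (t * B + j) = nth x0 bw j.
Proof.
elim: J x => [|J IH] x //= /orP[/eqP H|H].
  exists 0%N; split => // j Hj; by rewrite mul0n add0n -H nth_take.
have [t [Ht Hn]] := IH _ H.
exists t.+1; split => // j Hj; by rewrite -Hn // nth_drop mulSn addnA.
Qed.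

Lemma cyl_sub (w : seq Q) (x : int) c x0 (k : nat) :
  cyl w x c -> (forall j, (j < B)%N -> nth x0 w (k + j) = nth x0 bw j) ->
  (k + B <= size w)%N -> cyl bw (x + k%:Z) c.
Proof.
move=> Hc Hn Hk j Hj y0.
rewrite size_bw in Hj.
rewrite (set_nth_default x0) ?size_bw // -Hn // -(Hc (k + j)%N) ?PoszD ?addrA //; lia.
Qed.

Variable u : seq Q.

Definition good (J : nat) (w : seq Q) : bool :=
  hasblk J (take (J * B) w) && hasblk J (drop (J * B + size u) w).

Lemma good_det J w : size w = (size u + 2 * (J * B))%N -> good J w ->
  det delta u (J * B) w.
Proof.
move=> Hsw /andP[H1 H2] c c' Hc Hc' n j Hj.
have [x0 _] : exists x0 : Q, True by exists (c 0).
have [t1 [Ht1 Hn1]] := hasblkP x0 H1.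
have [t2 [Ht2 Hn2]] := hasblkP x0 H2.
have L1 : (t1 * B + B <= J * B)%N by rewrite addnC -mulSn leq_mul2r Ht1 orbT.
have L2 : (t2 * B + B <= J * B)%N by rewrite addnC -mulSn leq_mul2r Ht2 orbT.
have HB : (B = 2 * m + 1)%N by [].
set T1 := (t1 * B)%N in L1 Hn1; set T2 := (t2 * B)%N in L2 Hn2; set JB := (J * B)%N in Hsw L1 L2 Hn1 H2 Hn2 Hc Hc' *.
have Hn1' : forall j0, (j0 < B)%N -> nth x0 w (T1 + j0) = nth x0 bw j0.
  move=> j0 Hj0; rewrite -Hn1 // nth_take //; lia.
have Hn2' : forall j0, (j0 < B)%N -> nth x0 w ((JB + size u + T2) + j0) = nth x0 bw j0.
  move=> j0 Hj0; rewrite -Hn2 // nth_drop addnA //.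
pose y1 : int := - JB%:Z + T1%:Z + m%:Z.
pose y2 : int := (size u)%:Z + T2%:Z + m%:Z.
have Hb1 : forall d, cyl w (- JB%:Z) d -> cyl bw (y1 - m%:Z) d.
  move=> d Hd; have -> : y1 - m%:Z = - JB%:Z + T1%:Z by rewrite /y1; ring.
  apply: cyl_sub Hd Hn1' _; lia.
have Hb2 : forall d, cyl w (- JB%:Z) d -> cyl bw (y2 - m%:Z) d.
  move=> d Hd; have -> : y2 - m%:Z = - JB%:Z + (JB + size u + T2)%N%:Z by rewrite /y2 !PoszD; ring.
  apply: cyl_sub Hd Hn2' _; lia.
apply: (@segment _ _ delta y1 y2); last by lia.
- move=> k i /orP[Hi|Hi].
  + have Hi' : (`|(i - y1)%R| <= r)%N by lia.
    have E : y1 + (i - y1) = i by ring.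
    have := blk_shift (Hb1 _ Hc) k Hi'; have := blk_shift (Hb1 _ Hc') k Hi'.
    by rewrite E => -> ->.
  + have Hi' : (`|(i - y2)%R| <= r)%N by lia.
    have E : y2 + (i - y2) = i by ring.
    have := blk_shift (Hb2 _ Hc) k Hi'; have := blk_shift (Hb2 _ Hc') k Hi'.
    by rewrite E => -> ->.
- move=> i Hi.
  have Hk : (absz (i + JB%:Z)%R < size w)%N by lia.
  have Ei : i = - JB%:Z + (absz (i + JB%:Z)%R)%:Z by lia.
  by rewrite Ei (Hc _ Hk x0) (Hc' _ Hk x0).
Qed.

End Block.


Set Implicit Arguments.
Unset Strict Implicit.
Unset Printing Implicit Defensive.

Section Prob.
Import Order.TTheory GRing.Theory Num.Theory.
Local Open Scope ring_scope.
Variables (R : realType) (Q : finType) (p : Q -> R).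
Hypothesis p_ge0 : forall a, 0 <= p a.
Hypothesis p_sum : \sum_(a : Q) p a = 1.
Local Notation E := (EE p).

Lemma EE_mid t M F :
  E (t + (M + t)) (fun v => F (take M (drop t v))) = E M F.
Proof.
rewrite EE_concat -[RHS](EE_const p_sum t); apply: EE_ext => x Hx.
rewrite EE_concat; apply: EE_ext => y1 Hy1.
rewrite -[RHS](EE_const p_sum t (F y1)); apply: EE_ext => y2 _.
by rewrite drop_size_cat // take_size_cat.
Qed.

Lemma EE_window N k w : (k + size w <= N)%N ->
  E N (fun v => (take (size w) (drop k v) == w)%:R) = \prod_(x <- w) p x.
Proof.
move=> H.
have -> : N = (k + (size w + (N - k - size w)))%N by lia.
rewrite EE_concat -[RHS](EE_const p_sum k); apply: EE_ext => x Hx.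
rewrite EE_concat -(EE_eq p_sum w); apply: EE_ext => y1 Hy1.
rewrite -[RHS](EE_const p_sum (N - k - size w) ((y1 == w)%:R)); apply: EE_ext => y2 _.
by rewrite drop_size_cat // take_size_cat.
Qed.

Lemma EE_neq w : E (size w) (fun s => (s != w)%:R) = 1 - \prod_(x <- w) p x.
Proof.
have -> : E (size w) (fun s => (s != w)%:R) =
    E (size w) (fun s => (fun _ => 1) s + (-1) * (s == w)%:R).
  by apply: EE_ext => s _; case: (s == w) => /=; ring.
rewrite EE_add EE_scale EE_const // EE_eq //; ring.
Qed.

Lemma EE_ind_le1 n (b : seq Q -> bool) : E n (fun s => (b s)%:R) <= 1.
Proof.
apply: (@le_trans _ _ (E n (fun _ => 1))); last by rewrite EE_const.
apply: (EE_le p_ge0) => s _ /=; by case: (b s); rewrite /= ?ler01 ?lexx.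
Qed.

Variables (c0 : config Q) (m : nat).
Local Notation bw := (bw c0 m).
Local Notation B := (B m).

Lemma EE_hasblk J :
  E (J * B) (fun x => (~~ hasblk c0 m J x)%:R) = (1 - \prod_(x <- bw) p x) ^+ J.
Proof.
elim: J => [|J IH]; first by rewrite mul0n /= expr0.
have Hn := EE_neq bw; rewrite size_bw in Hn.
rewrite mulSn EE_concat exprSr -IH -Hn.
rewrite -EE_scale; apply: EE_ext => x1 Hx1.
rewrite mulrC -EE_scale; apply: EE_ext => x2 _ /=.
rewrite take_size_cat ?drop_size_cat ?size_bw //.
by case: (x1 == bw); case: (hasblk c0 m J x2) => /=; ring.
Qed.

End Prob.


Set Implicit Arguments.
Unset Strict Implicit.
Unset Printing Implicit Defensive.

Section Main.
Import Order.TTheory GRing.Theory Num.Theory.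
Import numFieldNormedType.Exports.
Local Open Scope classical_set_scope.
Local Open Scope ring_scope.
Variables (R : realType) (Q : finType) (r : nat)
  (delta : {ffun 'I_(2 * r + 1) -> Q} -> Q) (p : Q -> R).
Hypothesis p_pos : forall a, 0 < p a.
Hypothesis p_sum : \sum_(a : Q) p a = 1.
Local Notation A := (ca_iter delta).

Lemma p_ge0 a : 0 <= p a.
Proof. exact: ltW. Qed.

Lemma pf_EE n u : pushforward_cyl delta p n u =
  EE p (size u + 2 * (n * r)) (fun s => (`[< forall c : config Q,
     cyl s (- (n * r)%:Z) c -> cyl u 0 (A n c) >])%:R).
Proof.
rewrite /pushforward_cyl big_mkcond -tuple_sum; apply: eq_bigr => v _.
by case: ifP => _ /=; rewrite ?mul1r ?mul0r.
Qed.

Lemma det_bound (Hns : ~ sensitive delta) u eps : 0 < eps ->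
  exists a, (r = 0%N -> a = 0%N) /\
    EE p (size u + 2 * a) (fun w => (~~ `[< det delta u a w >])%:R) <= eps.
Proof.
move=> Heps.
case: (posnP r) => Hr.
  exists 0%N; split => //.
  apply: le_trans (_ : EE p (size u + 2 * 0) (fun _ => 0) <= _); last first.
    by rewrite EE_const //; apply: ltW.
  apply: (EE_le p_ge0) => w Hw.
  suff Hd : det delta u 0 w by rewrite asboolT.
  move=> c c' Hc Hc' n j Hj.
  apply: (light_cone delta (x := 0) (y := (size u)%:Z)); last by lia.
  move=> i; rewrite Hr muln0 subr0 addr0 => Hi.
  have Hk : (absz i < size w)%N by rewrite Hw; lia.
  have Ei : i = - (0%N)%:Z + (absz i)%:Z by lia.
  by rewrite Ei (Hc _ Hk (c 0)) (Hc' _ Hk (c 0)).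
have [c0 [m0 Hb0]] : exists c0 m0, forall (c' : config Q) n,
    agree_on m0 c0 c' -> agree_on r (A n c0) (A n c').
  apply: contrapT => H; apply: Hns; exists r => c m.
  apply: contrapT => H2; apply: H; exists c, m => c' n Hag.
  apply: contrapT => H3; apply: H2; by exists c', n.
set m := maxn m0 r.
have Hm : (r <= m)%N by apply: leq_maxr.
have Hblk : forall (c' : config Q) n, agree_on m c0 c' -> agree_on r (A n c0) (A n c').
  move=> c' n Hag; apply: Hb0 => i Hi; apply: Hag; rewrite /m; lia.
set beta := \prod_(x <- bw c0 m) p x.
have Hb0' : 0 < beta by apply: prodr_gt0 => a _.
have Hb1 : beta <= 1.
  by rewrite /beta -(EE_eq p_sum (bw c0 m)); apply: EE_ind_le1 => //; exact: p_ge0.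
have [J HJ] : exists J, (1 - beta) ^+ J <= eps / 2.
  have Hz : `|1 - beta| < 1 by rewrite ger0_norm; lra.
  have Heps2 : 0 < eps / 2 by lra.
  have := cvg_expr Hz; move/cvgrPdist_le => /(_ _ Heps2) [N _ HN].
  exists N; have := HN N (leqnn N).
  by rewrite sub0r normrN ger0_norm // exprn_ge0 //; lra.
exists (J * B m)%N; split; first by move=> Hr0; rewrite Hr0 in Hr.
set JB := (J * B m)%N.
have T1 : EE p (size u + 2 * JB) (fun w => (~~ hasblk c0 m J (take JB w))%:R)
    = (1 - beta) ^+ J.
  have -> : (size u + 2 * JB = JB + (size u + JB))%N by lia.
  rewrite EE_concat -(EE_hasblk p_sum c0 m J); apply: EE_ext => x Hx.
  rewrite -[RHS](EE_const p_sum (size u + JB)); apply: EE_ext => z _.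
  by rewrite take_size_cat.
have T2 : EE p (size u + 2 * JB) (fun w => (~~ hasblk c0 m J (drop (JB + size u) w))%:R)
    = (1 - beta) ^+ J.
  have -> : (size u + 2 * JB = JB + (size u + JB))%N by lia.
  rewrite EE_concat -[RHS](EE_const p_sum JB); apply: EE_ext => x Hx.
  rewrite EE_concat -[RHS](EE_const p_sum (size u)); apply: EE_ext => z1 Hz1.
  rewrite -(EE_hasblk p_sum c0 m J); apply: EE_ext => z2 _.
  by rewrite catA drop_size_cat // size_cat Hx Hz1.
apply: le_trans (_ : EE p (size u + 2 * JB) (fun w =>
   (~~ hasblk c0 m J (take JB w))%:R + (~~ hasblk c0 m J (drop (JB + size u) w))%:R) <= _).
  apply: (EE_le p_ge0) => w Hw.
  case: (asboolP (det delta u JB w)) => Hd /=.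
    by apply: addr_ge0; apply: ler0n.
  have Hg : ~~ good c0 m u J w.
    by apply/negP => Hg; apply: Hd; apply: (good_det Hm Hblk Hw Hg).
  move: Hg; rewrite /good.
  by case: (hasblk c0 m J (take JB w)); case: (hasblk c0 m J _) => //=; rewrite ?add0r ?addr0 ?lexx // ler_wpDr.
rewrite EE_add T1 T2; lra.
Qed.

Lemma vanish (Hns : ~ sensitive delta) u : (0 < size u)%N ->
  ~ brick_of_wall delta u -> vanishing delta p u.
Proof.
move=> Hu Hnb.
have [x0 _] : exists x0 : Q, True by case: u Hu Hnb => // a _ _ _; exists a.
rewrite /vanishing; apply/cvgrPdist_le => eps Heps.
have [a [Ha0 Hdb]] := det_bound Hns u Heps.
have Hth : forall w : (size u + 2 * a).-tuple Q, exists N : nat,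
    det delta u a w -> forall n, (N <= n)%N ->
      ~ cyl u 0 (A n (pext x0 w (- a%:Z))).
  move=> w; apply: contrapT => H.
  have Hd : det delta u a w.
    by apply: contrapT => Hd; apply: H; exists 0%N => Hd'.
  apply: Hnb; apply: (@brick_from_det _ _ delta u a w x0) => //.
    by rewrite size_tuple.
  move=> N; apply: contrapT => H2; apply: H; exists N => _ n Hn Hocc.
  by apply: H2; exists n.
case: (choice Hth) => f Hf.
exists (maxn a (\max_(w : (size u + 2 * a).-tuple Q) f w)) => // n Hn.
have Hpf0 : 0 <= pushforward_cyl delta p n u.
  by rewrite pf_EE; apply: (EE_ge0 p_ge0 p_sum) => s _; apply: ler0n.
rewrite sub0r normrN ger0_norm // pf_EE.
have Han : (a <= n * r)%N.
  case: (posnP r) => Hr; first by rewrite Ha0.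
  apply: leq_trans (_ : (a <= n)%N) _; first by move: Hn; rewrite /=; lia.
  by rewrite leq_pmulr.
have -> : (size u + 2 * (n * r) = (n * r - a) + ((size u + 2 * a) + (n * r - a)))%N by lia.
rewrite EE_concat.
apply: le_trans (_ : EE p (n * r - a) (fun _ => EE p (size u + 2 * a)
   (fun w => (~~ `[< det delta u a w >])%:R)) <= _); last by rewrite EE_const.
apply: (EE_le p_ge0) => x Hx; rewrite EE_concat; apply: (EE_le p_ge0) => w Hw.
rewrite -[X in _ <= X](EE_const p_sum (n * r - a)); apply: (EE_le p_ge0) => y Hy.
case: (asboolP (det delta u a w)) => Hd /=; last first.
  by case: asboolP => _; rewrite ?ler01 ?lexx.
case: asboolP => HC /=; last by [].
exfalso.
set v := x ++ (w ++ y).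
pose c := fun i : int => nth x0 v (absz (i + (n * r)%:Z)).
have Hcv : cyl v (- (n * r)%:Z) c.
  move=> j Hj y0; rewrite /c.
  have -> : absz (- (n * r)%:Z + j%:Z + (n * r)%:Z) = j by lia.
  exact: set_nth_default.
have Hocc := HC c Hcv.
have Hcw : cyl w (- a%:Z) c.
  move=> j Hj y0; rewrite /c.
  have -> : absz (- a%:Z + j%:Z + (n * r)%:Z) = (size x + j)%N by lia.
  rewrite /v nth_cat ltnNge leq_addr /= addKn nth_cat Hj.
  exact: set_nth_default.
have Hw' : size w == (size u + 2 * a)%N by apply/eqP.
have Hle : (f (Tuple Hw') <= n)%N.
  apply: (leq_trans (@leq_bigmax _ f (Tuple Hw'))); move: Hn; rewrite /=; lia.
apply: (Hf (Tuple Hw') Hd n Hle) => j Hj y0.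
rewrite -(Hocc j Hj y0) !add0r /=.
have Hcs : cyl w (- a%:Z) (pext x0 w (- a%:Z)) by apply: pext_cyl.
exact: (Hd _ _ Hcs Hcw n j Hj).
Qed.

Lemma lower_bound u (W : nat -> seq Q) n :
  is_wall delta W -> (1 <= n)%N -> W n = u ->
  \prod_(x <- W 0%N) p x <= pushforward_cyl delta p n u.
Proof.
move=> [HWne [HWc HWs]] Hn HWn.
have [x0 _] : exists x0 : Q, True.
  by move: (HWne 0%N); case: (W 0%N) => // a _ _; exists a.
have HsW : forall k, (size (W k) <= size (W 0%N))%N.
  elim=> // k IH; exact: leq_trans (HWs k) IH.
have Hu0 : (size u <= size (W 0%N))%N by rewrite -HWn.
set W0 := W 0%N in Hu0 HsW *.
set t := size W0.
set M := (size u + 2 * (n * r))%N.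
rewrite pf_EE -/M -(EE_mid p_sum t M).
set d := ((t.+1 %/ 2) - ((size u).+1 %/ 2))%N.
have Hd1 : ((size u).+1 %/ 2 <= t.+1 %/ 2)%N by apply: leq_div2r.
have Hdt : (d <= t)%N by rewrite /d; lia.
set k := (t + n * r - d)%N.
apply: le_trans (_ : EE p (t + (M + t))
    (fun v => (take (size W0) (drop k v) == W0)%:R) <= _).
  rewrite (EE_window p_sum (N := (t + (M + t))%N) (k := k) (w := W0)) ?lexx //.
  rewrite /M /k -/t; lia.
apply: (EE_le p_ge0) => v Hv.
case: eqP => Hwin /=; last by case: asboolP => _; rewrite ?ler01 ?lexx.
case: asboolP => HC /=; first by rewrite lexx.
exfalso; apply: HC => c Hc.
pose c2 := fun i : int => if (- (n * r)%:Z <= i) && (i < (size u)%:Z + (n * r)%:Z)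
  then c i else nth x0 v (absz (i + (n * r)%:Z + t%:Z)).
have Hc2 : forall i : int, - (n * r)%:Z - t%:Z <= i < (size u)%:Z + (n * r)%:Z + t%:Z ->
    c2 i = nth x0 v (absz (i + (n * r)%:Z + t%:Z)).
  move=> i Hi; rewrite /c2; case: ifP => // Hin.
  have Hsz : size (take M (drop t v)) = M by rewrite size_takel // size_drop Hv; lia.
  have Hidx : (absz (i + (n * r)%:Z)%R < size (take M (drop t v)))%N.
    rewrite Hsz /M; lia.
  have Ei : i = - (n * r)%:Z + (absz (i + (n * r)%:Z))%:Z by lia.
  rewrite {1}Ei (Hc _ Hidx x0) nth_take; last by move: Hidx; rewrite Hsz.
  rewrite nth_drop; congr nth; lia.
have Hc2W : cyl W0 (- d%:Z) c2.
  move=> j Hj y0; rewrite Hc2; last by rewrite /d; lia.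
  have -> : absz (- d%:Z + j%:Z + (n * r)%:Z + t%:Z) = (k + j)%N by rewrite /k; lia.
  rewrite -Hwin nth_take // nth_drop.
  apply: set_nth_default; rewrite Hv /k /M; move: Hj; rewrite -/t; lia.
set hu : int := ((size u).+1 %/ 2)%:Z.
pose c3 := fun i => c2 (i + hu).
have Hc3 : ccyl W0 c3.
  rewrite ccyl_eq => j Hj y0; rewrite /c3 -(Hc2W j Hj y0); congr c2.
  rewrite /hu /d; lia.
have := HWc c3 Hc3 n Hn; rewrite HWn ccyl_eq /c3 A_shift => Hu3.
move=> j Hj y0.
have E1 := Hu3 j Hj y0.
have Ej : - ((size u).+1 %/ 2)%:Z + j%:Z + hu = j%:Z by rewrite /hu; ring.
rewrite Ej in E1; rewrite -E1 add0r.
apply: (light_cone delta (x := 0) (y := (size u)%:Z)); last by lia.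
move=> i Hi; rewrite /c2 ifT //; lia.
Qed.

Lemma persist u : (0 < size u)%N -> brick_of_wall delta u -> persistent delta p u.
Proof.
move=> Hu [W [HW [P [n0 [HP HWu]]]]] Hv.
set b0 := \prod_(x <- W 0%N) p x.
have Hb0 : 0 < b0 by apply: prodr_gt0 => a _.
move/cvgrPdist_lt: Hv => /(_ b0 Hb0) [N _ HN].
have HNP : (N.+1 <= P * N.+1)%N by rewrite leq_pmull.
have HNn : (N <= P * N.+1 + n0)%N by lia.
have := HN _ HNn.
have H1n : (1 <= P * N.+1 + n0)%N by lia.
have Hlb := lower_bound HW H1n (HWu N.+1).
have Hpf0 : 0 <= pushforward_cyl delta p (P * N.+1 + n0) u.
  by rewrite pf_EE; apply: (EE_ge0 p_ge0 p_sum) => s _; apply: ler0n.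
rewrite sub0r normrN ger0_norm //.
by move=> H2; have := le_lt_trans Hlb H2; rewrite ltxx.
Qed.

End Main.

Theorem mainTheorem1 (R : realType) (Q : finType) (r : nat)
  (delta : {ffun 'I_(2 * r + 1) -> Q} -> Q) (p : Q -> R) :
  ~ sensitive delta ->
  complete_bernoulli p ->
  forall u : seq Q, u != [::] ->
    (persistent delta p u <-> brick_of_wall delta u).
Proof.
move=> Hns [Hpos Hsum] u Hu.
have Hu' : (0 < size u)%N by rewrite lt0n size_eq0.
split.
- move=> Hp; apply: contrapT => Hnb; apply: Hp.
  exact: (vanish Hpos Hsum Hns Hu' Hnb).
- exact: (persist Hpos Hsum Hu').
Qed.
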